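(* Let $k$ be a positive integer. If a graph $G$ is $k$-maximal, then $\kappa'(G)=\overline{\kappa'}(G)=k$.
   Context: Graphs are finite, loopless, possibly with multiple edges. $\kappa'(G)$ is the edge connectivity and $\overline{\kappa'}(G)=\max\{\kappa'(H): H \text{ a subgraph of } G\}$. A graph $G$ is $k$-maximal if $\overline{\kappa'}(G)\le k$ but for any new edge $e\notin E(G)$ joining two vertices of $G$ (possibly parallel to an existing edge), $\overline{\kappa'}(G+e)\ge k+1$. *)

(* Defs.v *)
(* Finite loopless multigraphs on a finite vertex type V,
   represented by an edge-multiplicity function m : V -> V -> nat
   (m x y = number of parallel edges between x and y). *)
From mathcomp Require Import all_boot all_order.
Set Implicit Arguments. Unset Strict Implicit. Unset Printing Implicit Defensive.

Section Multigraphs.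
Variable V : finType.

Definition mgraph (m : V -> V -> nat) : Prop :=
  (forall x y, m x y = m y x) /\ (forall x, m x x = 0).

Definition cut_size (S X : {set V}) (m : V -> V -> nat) : nat :=
  \sum_(x in X) \sum_(y in S :\: X) m x y.

(* edge connectivity kappa' of the graph with vertex set S and edge
   multiplicities m (supported on S): the minimum size of an edge cut
   [X, S\X] with X a nonempty proper subset of S; 0 if |S| <= 1.
   The identity of the min is the total edge count (times 2), which is an
   upper bound for every cut, so this is the true minimum. *)
Definition edge_conn (S : {set V}) (m : V -> V -> nat) : nat :=
  if #|S| <= 1 then 0
  else \big[minn/ \sum_(x in S) \sum_(y in S) m x y]_(X : {set V} |
          (X \proper S) && (X != set0)) cut_size S X m.

Definition subgraphb (S : {set V}) (h m : V -> V -> nat) : bool :=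
  [forall x, forall y, [&& h x y <= m x y, h x y == h y x &
                         (h x y != 0) ==> (x \in S) && (y \in S)]].

(* maximum edge multiplicity of m; every subgraph multiplicity is bounded
   by it, so subgraphs are enumerated by finite functions into 'I_(M+1) *)
Definition maxmult (m : V -> V -> nat) : nat := \max_(p : V * V) m p.1 p.2.

Definition kbar (m : V -> V -> nat) : nat :=
  \max_(S : {set V})
    \max_(f : {ffun V * V -> 'I_(maxmult m).+1} |
            subgraphb S (fun x y => val (f (x, y))) m)
       edge_conn S (fun x y => val (f (x, y))).

Definition add_edge (m : V -> V -> nat) (u v : V) : V -> V -> nat :=
  fun x y => m x y + (((x == u) && (y == v)) || ((x == v) && (y == u))).

Definition k_maximal (k : nat) (m : V -> V -> nat) : Prop :=
  kbar m <= k /\ forall u v : V, u != v -> k.+1 <= kbar (add_edge m u v).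

End Multigraphs.

(* Main.v *)
Require Import Defs.
From mathcomp Require Import all_boot all_order.
From Stdlib Require Import FunctionalExtensionality.

Lemma sum_sub (T : finType) (A B : {set T}) (F : T -> nat) :
  A \subset B -> \sum_(i in A) F i <= \sum_(i in B) F i.
Proof.
move=> /subsetP AB; apply: (sub_le_big (leqnn) (fun x y => leq_addr y x)).
by move=> i; apply: AB.
Qed.

Lemma le_kbar (V : finType) (S : {set V}) (h m : V -> V -> nat) :
  subgraphb S h m -> edge_conn S h <= kbar m.
Proof.
move=> Hs.
have Hle : forall x y, h x y <= maxmult m.
  move=> x y; move/forallP: Hs => /(_ x) /forallP /(_ y) /and3P [H1 _ _].
  apply: leq_trans H1 _; rewrite /maxmult; exact: (leq_bigmax (x, y)).
pose f : {ffun V * V -> 'I_(maxmult m).+1} := [ffun p => inord (h p.1 p.2)].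
have Hf : (fun x y => val (f (x, y))) = h.
  apply: functional_extensionality => x; apply: functional_extensionality => y.
  by rewrite /f ffunE /= inordK // ltnS.
rewrite /kbar; apply: leq_trans (leq_bigmax S).
have := @leq_bigmax_cond _ (fun f : {ffun V * V -> 'I_(maxmult m).+1} =>
            subgraphb S (fun x y => val (f (x, y))) m)
         (fun f => edge_conn S (fun x y => val (f (x, y)))) f.
by rewrite Hf; apply.
Qed.

Lemma bigmin_le (I : eqType) (r : seq I) (P : pred I) (F : I -> nat) x j :
  j \in r -> P j -> \big[minn/x]_(i <- r | P i) F i <= F j.
Proof.
elim: r => // a r IH; rewrite inE big_cons => /orP [/eqP -> ->|jr Pj].
  exact: geq_minl.
case: (P a); last exact: IH.
by apply: leq_trans (geq_minr _ _) (IH jr Pj).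
Qed.

Lemma edge_conn_le (V : finType) (S X : {set V}) (h : V -> V -> nat) :
  X \proper S -> X != set0 -> edge_conn S h <= cut_size S X h.
Proof.
move=> XS X0; rewrite /edge_conn.
case: ifP => _ //.
by apply: bigmin_le; rewrite ?mem_index_enum // XS X0.
Qed.

Lemma cut_le_total (V : finType) (S X : {set V}) (h : V -> V -> nat) :
  X \subset S -> cut_size S X h <= \sum_(x in S) \sum_(y in S) h x y.
Proof.
move=> XS; rewrite /cut_size.
apply: (@leq_trans (\sum_(x in X) \sum_(y in S) h x y)).
  apply: leq_sum => x _; apply: sum_sub; exact: subsetDl.
exact: sum_sub.
Qed.

Lemma sum_e (V : finType) (X : {set V}) (u v : V) :
  u \in X -> v \notin X ->
  \sum_(x in X) \sum_(y in [set: V] :\: X)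
     (((x == u) && (y == v)) || ((x == v) && (y == u)) : nat) = 1.
Proof.
move=> uX vX.
rewrite (bigD1 u) //= [X in _ + X]big1 ?addn0; last first.
  move=> x /andP [xX xu]; apply: big1 => y _.
  rewrite (negbTE xu) /=.
  by case: eqP => // xv; subst x; rewrite xX in vX.
have vin : v \in [set: V] :\: X by rewrite !inE vX.
rewrite (bigD1 v) //= !eqxx /= big1 // => y /andP [yX yv].
rewrite (negbTE yv) /=; case: eqP => // uv; subst u.
by rewrite uX in vX.
Qed.

Arguments sum_sub {T A B F}.
Arguments le_kbar {V S h m}.
Arguments edge_conn_le {V S X} h.
Arguments cut_le_total {V S X} h.

Theorem lemma3p3 (V : finType) (m : V -> V -> nat) (k : nat) :
  0 < k -> 2 <= #|V| -> mgraph m -> k_maximal k m ->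
  edge_conn [set: V] m = k /\ kbar m = k.
Proof.
move=> k0 V2 [msym mloop] [kb kmax].
have subT : subgraphb [set: V] m m.
  by apply/forallP => x; apply/forallP => y; rewrite leqnn msym eqxx !inE implybT.
have ecle : edge_conn [set: V] m <= k := leq_trans (le_kbar subT) kb.
have cutk : forall X : {set V}, X \proper [set: V] -> X != set0 ->
    k <= cut_size [set: V] X m.
  move=> X XT X0; rewrite leqNgt; apply/negP => ck.
  have [u uX] : exists u, u \in X by apply/set0Pn.
  have [v vX] : exists v, v \notin X.
    case/properP: XT => _ [v _ vX]; by exists v.
  have uv : u != v by apply/eqP => E; subst v; rewrite uX in vX.
  have := kmax u v uv; rewrite ltnNge => /negP; apply.
  apply/bigmax_leqP => S _; apply/bigmax_leqP => f Hs.
  set h := fun x y => val (f (x, y)) in Hs *.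
  have hle : forall x y, h x y <= add_edge m u v x y.
    move=> x y; move/forallP: Hs => /(_ x) /forallP /(_ y) /and3P [H1 _ _] //.
  have hsup : forall x y, h x y != 0 -> (x \in S) && (y \in S).
    move=> x y; move/forallP: Hs => /(_ x) /forallP /(_ y) /and3P [_ _ H3].
    by move/implyP: H3.
  case: (boolP [exists a, [exists b, [&& a \in S, a \in X, b \in S & b \notin X]]]).
  - case/existsP => a /existsP [b /and4P [aS aX bS bX]].
    have P1 : S :&: X \proper S.
      apply/properP; split; first exact: subsetIl.
      by exists b; rewrite // inE (negbTE bX) andbF.
    have P2 : S :&: X != set0 by apply/set0Pn; exists a; rewrite inE aS.
    apply: leq_trans (edge_conn_le h P1 P2) _.
    rewrite /cut_size.
    apply: (@leq_trans (\sum_(x in X) \sum_(y in [set: V] :\: X) add_edge m u v x y)).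
      apply: leq_trans (sum_sub (subsetIr S X)).
      apply: leq_sum => x _.
      apply: (@leq_trans (\sum_(y in [set: V] :\: X) h x y)); last first.
        by apply: leq_sum => y _; apply: hle.
      apply: sum_sub; apply/subsetP => y; rewrite !inE.
      by case: (y \in X); case: (y \in S).
    rewrite /add_edge.
    under eq_bigr do rewrite big_split /=.
    rewrite big_split /= sum_e // addn1; exact: ck.
  - rewrite negb_exists => /forallP Hn.
    have huv : forall x y, h x y <= m x y.
      move=> x y; have := hle x y; rewrite /add_edge.
      case: (boolP (((x == u) && (y == v)) || ((x == v) && (y == u)))) => /= He;
        last by rewrite addn0.
      case: (boolP (h x y == 0)) => [/eqP -> //|hn].
      case/andP: (hsup x y hn) => xS yS.
      have := Hn x; rewrite negb_exists => /forallP /(_ y).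
      have := Hn y; rewrite negb_exists => /forallP /(_ x).
      case/orP: He => /andP [/eqP ? /eqP ?]; subst x y;
        by rewrite xS yS uX vX.
    have Hs' : subgraphb S h m.
      apply/forallP => x; apply/forallP => y.
      move/forallP: Hs => /(_ x) /forallP /(_ y) /and3P [_ H2 H3].
      by rewrite huv H2 H3.
    exact: leq_trans (le_kbar Hs') kb.
have ecge : k <= edge_conn [set: V] m.
  rewrite /edge_conn; have -> : (#|[set: V]| <= 1) = false by rewrite cardsT leqNgt V2.
  apply: (big_ind (fun x => k <= x)).
  - have [u _] : exists u : V, u \in [set: V].
      by apply/set0Pn; rewrite -card_gt0 cardsT; apply: leq_trans V2.
    have P1 : [set u] \proper [set: V].
      by rewrite properT; apply/negP => /eqP E; move: V2; rewrite -cardsT -E cards1.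
    apply: leq_trans (cutk _ P1 _) (cut_le_total _ (proper_sub P1)).
    by apply/set0Pn; exists u; rewrite inE.
  - by move=> x y Hx Hy; rewrite leq_min Hx Hy.
  - by move=> X /andP [XT X0]; apply: cutk.
have E : edge_conn [set: V] m = k by apply/eqP; rewrite eqn_leq ecle ecge.
split => //; apply/eqP; rewrite eqn_leq kb /=.
by rewrite -{1}E; apply: le_kbar.
Qed.
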